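(* If $Q$ is a quadrilateral in $K^2$ in standard form, then the centroid of $Q$ is the origin if and only if the vertices of $Q$ are the vertices of a parallelogram.
   Context: $K$ is a field of characteristic $\neq 2$. A quadrilateral $Q=ABA'B'$ consists of four distinct lines $A,B,A',B'$ (sides) in $K^2$, not all through one point, with adjacent sides ($A,B$; $B,A'$; $A',B'$; $B',A$) not parallel; opposite sides may be parallel. Vertices: $A\cap B$, $B\cap A'$, $A'\cap B'$, $B'\cap A$ (two may coincide if three sides are concurrent). The centroid is the average of the four vertices (equivalently the midpoint of the midpoints of the diagonals). $Q$ is in standard form if $A$ is the line $Y=0$ and $A'$ is the line $X=0$. A parallelogram is a quadrilateral whose pairs of opposite sides are parallel. *)

(* Defs.v *)
From HB Require Import structures.
From mathcomp Require Import all_boot all_order all_algebra.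
Set Implicit Arguments. Unset Strict Implicit. Unset Printing Implicit Defensive.
Import Order.TTheory GRing.Theory Num.Theory.
Local Open Scope ring_scope.

Section Geometry.
Variable K : fieldType.

Record line := Line { la : K; lb : K; lc : K; lnz : (la != 0) || (lb != 0) }.

Definition on_line (l : line) (p : K * K) : bool :=
  la l * p.1 + lb l * p.2 == lc l.

Definition same_line (l m : line) : Prop := forall p, on_line l p = on_line m p.

Definition parallel (l m : line) : Prop :=
  same_line l m \/ ~ (exists p, on_line l p && on_line m p).

(* intersection point of two non-parallel lines (Cramer's rule) *)
Definition meet (l m : line) : K * K :=
  let d := la l * lb m - lb l * la m in
  ((lc l * lb m - lb l * lc m) / d, (la l * lc m - lc l * la m) / d).

Definition is_quad (A B A' B' : line) : Prop :=
  ~ same_line A B /\ ~ same_line A A' /\ ~ same_line A B' /\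
  ~ same_line B A' /\ ~ same_line B B' /\ ~ same_line A' B' /\
  ~ (exists p, [&& on_line A p, on_line B p, on_line A' p & on_line B' p]) /\
  ~ parallel A B /\ ~ parallel B A' /\ ~ parallel A' B' /\ ~ parallel B' A.

Definition vertices (A B A' B' : line) : seq (K * K) :=
  [:: meet A B; meet B A'; meet A' B'; meet B' A].

Definition centroid (A B A' B' : line) : K * K :=
  let v := vertices A B A' B' in
  ((\sum_(p <- v) p.1) / 4%:R, (\sum_(p <- v) p.2) / 4%:R).

Definition standard_form (A B A' B' : line) : Prop :=
  (forall p, on_line A p = (p.2 == 0)) /\ (forall p, on_line A' p = (p.1 == 0)).

Definition is_parallelogram (P1 P2 P3 P4 : line) : Prop :=
  [/\ is_quad P1 P2 P3 P4, parallel P1 P3 & parallel P2 P4].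

End Geometry.

(* Main.v *)
Require Import Defs.
From HB Require Import structures.
From mathcomp Require Import all_boot all_order all_algebra ring.
From Stdlib Require Import Classical.
Set Implicit Arguments. Unset Strict Implicit.
Import Order.TTheory GRing.Theory Num.Theory.
Local Open Scope ring_scope.

Section H.
Variable K : fieldType.
Implicit Types l m : line K.

Definition det l m := la l * lb m - lb l * la m.

Lemma transfer (a1 b1 a3 b3 x y : K) : (a3 != 0) || (b3 != 0) ->
  a1 * b3 = b1 * a3 -> a3 * x + b3 * y = 0 -> a1 * x + b1 * y = 0.
Proof.
move=> /orP [] h e H.
  apply: (mulfI h); rewrite mulr0.
  have ->: a3 * (a1 * x + b1 * y) = a1 * (a3 * x + b3 * y) + y * (b1 * a3 - a1 * b3) by ring.
  by rewrite H e subrr !mulr0 addr0.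
apply: (mulfI h); rewrite mulr0.
have ->: b3 * (a1 * x + b1 * y) = b1 * (a3 * x + b3 * y) + x * (a1 * b3 - b1 * a3) by ring.
by rewrite H e subrr !mulr0 addr0.
Qed.

Lemma cross_of (a b dx dy wx wy : K) : (a != 0) || (b != 0) ->
  a * dx + b * dy = 0 -> a * wx + b * wy = 0 -> dx * wy - dy * wx = 0.
Proof.
move=> /orP [] h e1 e2; apply: (mulfI h); rewrite mulr0.
  have ->: a * (dx * wy - dy * wx) = (a * dx + b * dy) * wy - dy * (a * wx + b * wy) by ring.
  by rewrite e1 e2 mul0r mulr0 subrr.
have ->: b * (dx * wy - dy * wx) = dx * (a * wx + b * wy) - wx * (a * dx + b * dy) by ring.
by rewrite e1 e2 !mulr0 subrr.
Qed.

Lemma meet_on l m : det l m != 0 -> on_line l (meet l m) && on_line m (meet l m).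
Proof.
rewrite /det /on_line /meet /= => h; apply/andP; split; apply/eqP; field; exact h.
Qed.

Lemma dir_on l p q : on_line l p -> on_line l q ->
  la l * (p.1 - q.1) + lb l * (p.2 - q.2) = 0.
Proof.
rewrite /on_line => /eqP e1 /eqP e2.
have ->: la l * (p.1 - q.1) + lb l * (p.2 - q.2) =
  (la l * p.1 + lb l * p.2) - (la l * q.1 + lb l * q.2) by ring.
by rewrite e1 e2 subrr.
Qed.

Lemma same_of_det0 l m p : det l m = 0 -> on_line l p -> on_line m p -> same_line l m.
Proof.
rewrite /det => /eqP; rewrite subr_eq0 => /eqP d hl hm q.
have H1 : forall l1 l2, la l1 * lb l2 = lb l1 * la l2 -> on_line l1 p -> on_line l2 p ->
   on_line l1 q -> on_line l2 q.
  move=> l1 l2 d' h1 h2 h3.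
  have := dir_on h3 h1 => E.
  have E2 : la l2 * (q.1 - p.1) + lb l2 * (q.2 - p.2) = 0.
    apply: (transfer (lnz l1)) E.
    by rewrite mulrC -d' mulrC.
  move: h2; rewrite /on_line => /eqP <-.
  rewrite -subr_eq0; apply/eqP; rewrite -E2; ring.
apply/idP/idP; first exact: H1.
apply: H1 => //; by rewrite mulrC -d mulrC.
Qed.

Lemma det_of_npar l m : ~ parallel l m -> det l m != 0.
Proof.
move=> np; apply/eqP => d; apply: np.
case: (classic (exists p, on_line l p && on_line m p)) => [[p /andP [h1 h2]]|nd].
  by left; exact: (same_of_det0 d h1 h2).
by right.
Qed.

Lemma det0_of_par l m : ~ same_line l m -> parallel l m -> det l m = 0.
Proof.
move=> ns [//|nd].
case: (eqVneq (det l m) 0) => // h; exfalso; apply: nd.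
by exists (meet l m); exact: meet_on.
Qed.

Lemma disj_of_par l m : ~ same_line l m -> parallel l m ->
  forall p, on_line l p -> on_line m p -> False.
Proof. move=> ns [//|nd] p h1 h2; apply: nd; exists p; by rewrite h1 h2. Qed.

Lemma pair2 (p : K * K) : p.2 = 0 -> p = (p.1, 0).
Proof. by case: p => a b /= ->. Qed.
Lemma pair1 (p : K * K) : p.1 = 0 -> p = (0, p.2).
Proof. by case: p => a b /= ->. Qed.

Lemma lin (c1 c2 a b X : K) : a = 0 -> b = 0 -> X = c1 * a + c2 * b -> X = 0.
Proof. by move=> -> -> ->; rewrite !mulr0 addr0. Qed.
Arguments lin c1 c2 {a b X}.

Lemma facl (x y : K) : y != 0 -> x * y = 0 -> x = 0.
Proof. by move=> hy /eqP; rewrite mulf_eq0 (negbTE hy) orbF => /eqP. Qed.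
Lemma facr (x y : K) : x != 0 -> x * y = 0 -> y = 0.
Proof. by move=> hx /eqP; rewrite mulf_eq0 (negbTE hx) /= => /eqP. Qed.

Ltac clash := match goal with H : is_true (?x != ?x) |- _ => by rewrite eqxx in H end.
Ltac lintac e1 e2 := first
  [ apply: (lin 1 1 e1 e2); ring | apply: (lin 1 (-1) e1 e2); ring
  | apply: (lin (-1) 1 e1 e2); ring | apply: (lin (-1) (-1) e1 e2); ring
  | apply: (lin 1 0 e1 e2); ring | apply: (lin (-1) 0 e1 e2); ring
  | apply: (lin 0 1 e1 e2); ring | apply: (lin 0 (-1) e1 e2); ring ].

Lemma back (u u' v v' : K) (V1 V2 V3 V4 : K * K) :
  V1 != V2 -> V1 != V3 -> V1 != V4 -> V2 != V3 -> V2 != V4 -> V3 != V4 ->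
  (V1.1 - V4.1) * (V3.2 - V2.2) - (V1.2 - V4.2) * (V3.1 - V2.1) = 0 ->
  (V2.1 - V1.1) * (V4.2 - V3.2) - (V2.2 - V1.2) * (V4.1 - V3.1) = 0 ->
  V1 \in [:: (u, 0); (0, v); (0, v'); (u', 0)] ->
  V2 \in [:: (u, 0); (0, v); (0, v'); (u', 0)] ->
  V3 \in [:: (u, 0); (0, v); (0, v'); (u', 0)] ->
  V4 \in [:: (u, 0); (0, v); (0, v'); (u', 0)] ->
  u + u' = 0 /\ v + v' = 0.
Proof.
move=> d12 d13 d14 d23 d24 d34 e1 e2.
rewrite !inE.
case/or4P => /eqP ?; subst V1; case/or4P => /eqP ?; subst V2;
case/or4P => /eqP ?; subst V3; case/or4P => /eqP ?; subst V4; try clash.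
all: have huu : u - u' != 0 by (rewrite subr_eq0; apply/eqP => E; subst u'; clash).
all: have hvv : v - v' != 0 by (rewrite subr_eq0; apply/eqP => E; subst v'; clash).
all: rewrite /= in e1 e2.
all: try first [ exfalso; move/eqP: (mulf_neq0 huu hvv); apply; lintac e1 e2
      | split; [apply: (facl hvv); lintac e1 e2 | apply: (facr huu); lintac e1 e2]].
Qed.


Lemma nsame_of l m p : on_line l p -> ~~ on_line m p -> ~ same_line l m.
Proof. by move=> h1 h2 s; move: h2; rewrite -s h1. Qed.

Lemma npar_of l m p : ~ same_line l m -> on_line l p -> on_line m p -> ~ parallel l m.
Proof. by move=> ns h1 h2 [//|nd]; apply: nd; exists p; rewrite h1 h2. Qed.

Lemma neqc (x y c : K) : c != 0 -> x - y = c \/ x - y = - c -> x != y.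
Proof.
move=> hc H; apply/eqP => E; subst y; rewrite subrr in H.
case: H => E; move: hc; first by rewrite -E eqxx.
by rewrite -oppr_eq0 -E eqxx.
Qed.

Lemma clashl (x c d e : K) : e != 0 -> c - d = e \/ c - d = - e -> x = c -> x = d -> False.
Proof. by move=> he H E1 E2; move: (neqc he H); rewrite -E1 -E2 eqxx. Qed.

Lemma meet_eq l m p : det l m != 0 -> on_line l p -> on_line m p -> meet l m = p.
Proof.
rewrite /det /meet => h /eqP h1 /eqP h2; rewrite -h1 -h2.
case: p {h1 h2} => a b /=; congr pair; field; exact h.
Qed.

Lemma neq_of l m p q : on_line l p -> on_line m q ->
  (forall r, on_line l r -> on_line m r -> False) -> p != q.
Proof. by move=> h1 h2 H; apply/eqP => E; subst q; exact: H h1 h2. Qed.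

Lemma lnz_of (a b : K) : a != 0 -> (a != 0) || (b != 0).
Proof. by move=> ->. Qed.

Definition rl (a b c : K) (h : a != 0) : line K := @Line K a b c (lnz_of b h).

End H.

Theorem corollary4p5 (K : fieldType) (hK : (2%:R : K) != 0)
    (A B A' B' : line K) :
  is_quad A B A' B' -> standard_form A B A' B' ->
  (centroid A B A' B' = (0, 0) <->
   exists P1 P2 P3 P4 : line K,
     is_parallelogram P1 P2 P3 P4 /\
     vertices A B A' B' =i vertices P1 P2 P3 P4).
Proof.
move=> hq [sA sA'].
case: hq => nAB [nAA' [nAB' [nBA' [nBB' [nA'B' [nconc [pAB [pBA' [pA'B' pB'A]]]]]]]]].
have /andP [X1A X1B] := meet_on (det_of_npar pAB).
have /andP [Y1B Y1A'] := meet_on (det_of_npar pBA').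
have /andP [Y2A' Y2B'] := meet_on (det_of_npar pA'B').
have /andP [X2B' X2A] := meet_on (det_of_npar pB'A).
rewrite sA in X1A; rewrite sA in X2A; rewrite sA' in Y1A'; rewrite sA' in Y2A'.
have eX1 := pair2 (eqP X1A); have eX2 := pair2 (eqP X2A).
have eY1 := pair1 (eqP Y1A'); have eY2 := pair1 (eqP Y2A').
have eV : vertices A B A' B' = [:: ((meet A B).1, 0); (0, (meet B A').2);
   (0, (meet A' B').2); ((meet B' A).1, 0)] :> seq (K * K) by rewrite /vertices -eX1 -eX2 -eY1 -eY2.
rewrite eX1 in X1B; rewrite eX2 in X2B'; rewrite eY1 in Y1B; rewrite eY2 in Y2B'.
rewrite /centroid eV.
move: (meet A B).1 (meet B A').2 (meet A' B').2 (meet B' A).1 X1B Y1B Y2B' X2B' eV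
  => u v v' u' X1B Y1B Y2B' X2B' eV.
rewrite !big_cons !big_nil /=.
clear eX1 eX2 eY1 eY2 X1A X2A Y1A' Y2A'.
have h4 : (4%:R : K) != 0.
  by rewrite (_ : 4%:R = 2%:R * 2%:R :> K) ?mulf_neq0 // -natrM.
rewrite !add0r !addr0.
split.
- move=> [E1 E2].
  have H1 : u + u' = 0.
    by move/eqP: E1; rewrite mulf_eq0 invr_eq0 (negbTE h4) orbF => /eqP.
  have H2 : v + v' = 0.
    by move/eqP: E2; rewrite mulf_eq0 invr_eq0 (negbTE h4) orbF => /eqP.
  have eu : u' = - u by apply/eqP; rewrite -addr_eq0 addrC H1.
  have ev : v' = - v by apply/eqP; rewrite -addr_eq0 addrC H2.
  subst u' v'; clear E1 E2 H1 H2.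
  have hu : u != 0.
    apply/eqP => u0; subst u; apply: nconc; exists (0, 0).
    rewrite oppr0 in X2B'.
    by rewrite sA sA' /= eqxx X1B X2B'.
  have hv : v != 0.
    apply/eqP => v0; subst v; apply: nconc; exists (0, 0).
    rewrite oppr0 in Y2B'.
    by rewrite sA sA' /= eqxx Y1B Y2B'.
  have huv2 : u * v + u * v != 0.
    by rewrite (_ : u * v + u * v = u * v * 2%:R) ?mulf_neq0 //; ring.
  exists (rl u (u * v) hv), (rl (- u) (- (u * v)) hv),
         (rl u (- (u * v)) hv), (rl (- u) (u * v) hv).
  have m12 : meet (rl u (u * v) hv) (rl (- u) (- (u * v)) hv) = (0, v).
    apply: meet_eq; rewrite /det /on_line /=; last 2 first.
    + by apply/eqP; ring.
    + by apply/eqP; ring.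
    by apply: (neqc huv2); first [left; ring | right; ring].
  have m23 : meet (rl (- u) (- (u * v)) hv) (rl u (- (u * v)) hv) = (- u, 0).
    apply: meet_eq; rewrite /det /on_line /=; last 2 first.
    + by apply/eqP; ring.
    + by apply/eqP; ring.
    by apply: (neqc huv2); first [left; ring | right; ring].
  have m34 : meet (rl u (- (u * v)) hv) (rl (- u) (u * v) hv) = (0, - v).
    apply: meet_eq; rewrite /det /on_line /=; last 2 first.
    + by apply/eqP; ring.
    + by apply/eqP; ring.
    by apply: (neqc huv2); first [left; ring | right; ring].
  have m41 : meet (rl (- u) (u * v) hv) (rl u (u * v) hv) = (u, 0).
    apply: meet_eq; rewrite /det /on_line /=; last 2 first.
    + by apply/eqP; ring.
    + by apply/eqP; ring.
    by apply: (neqc huv2); first [left; ring | right; ring].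
  split; last first.
    move=> x; rewrite /vertices m12 m23 m34 m41 !inE.
    by case: (x == (u, 0)); case: (x == (0, v)); case: (x == (0, - v));
      case: (x == (- u, 0)); rewrite ?orbT ?orbF.
  Ltac onl := rewrite /on_line /=; apply/eqP; ring.
  Ltac offl h := rewrite /on_line /=; apply: (neqc h); first [left; ring | right; ring].
  split.
  + split; [|split; [|split; [|split; [|split; [|split; [|split; [|split; [|split; [|split]]]]]]]]].
    * by apply: (nsame_of (p := (u, 0))); [onl | offl huv2].
    * by apply: (nsame_of (p := (u, 0))); [onl | offl huv2].
    * by apply: (nsame_of (p := (0, v))); [onl | offl huv2].
    * by apply: (nsame_of (p := (0, v))); [onl | offl huv2].
    * by apply: (nsame_of (p := (0, v))); [onl | offl huv2].
    * by apply: (nsame_of (p := (- u, 0))); [onl | offl huv2].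
    * case=> p /and4P [h1 _ h3 _]; move: h1 h3.
      rewrite /on_line /= => /eqP E1 /eqP E2.
      by apply: (clashl huv2 _ E1 E2); first [left; ring | right; ring].
    * apply: (npar_of (p := (0, v))); [|onl|onl].
      by apply: (nsame_of (p := (u, 0))); [onl | offl huv2].
    * apply: (npar_of (p := (- u, 0))); [|onl|onl].
      by apply: (nsame_of (p := (0, v))); [onl | offl huv2].
    * apply: (npar_of (p := (0, - v))); [|onl|onl].
      by apply: (nsame_of (p := (- u, 0))); [onl | offl huv2].
    * apply: (npar_of (p := (u, 0))); [|onl|onl].
      by apply: (nsame_of (p := (0, - v))); [onl | offl huv2].
  + right; case=> p /andP []; rewrite /on_line /= => /eqP E1 /eqP E2.
    by apply: (clashl huv2 _ E1 E2); first [left; ring | right; ring].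
  + right; case=> p /andP []; rewrite /on_line /= => /eqP E1 /eqP E2.
    by apply: (clashl huv2 _ E1 E2); first [left; ring | right; ring].
- case=> P1 [P2 [P3 [P4 [[hq p13 p24] hV]]]].
  case: hq => n12 [n13 [n14 [n23 [n24 [n34 [_ [q12 [q23 [q34 q41]]]]]]]]].
  have /andP [a1 a2] := meet_on (det_of_npar q12).
  have /andP [b2 b3] := meet_on (det_of_npar q23).
  have /andP [c3 c4] := meet_on (det_of_npar q34).
  have /andP [d4 d1] := meet_on (det_of_npar q41).
  have D13 := disj_of_par n13 p13.
  have D24 := disj_of_par n24 p24.
  have D31 : forall r, on_line P3 r -> on_line P1 r -> False.
    by move=> r h1 h2; exact: D13 h2 h1.
  have t13 : la P1 * lb P3 = lb P1 * la P3.
    by have := det0_of_par n13 p13; rewrite /det => /eqP; rewrite subr_eq0 => /eqP.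
  have t24 : la P2 * lb P4 = lb P2 * la P4.
    by have := det0_of_par n24 p24; rewrite /det => /eqP; rewrite subr_eq0 => /eqP.
  have e1 := cross_of (lnz P1) (dir_on a1 d1) (transfer (lnz P3) t13 (dir_on c3 b3)).
  have e2 := cross_of (lnz P2) (dir_on b2 a2) (transfer (lnz P4) t24 (dir_on d4 c4)).
  have mem : forall x, x \in vertices P1 P2 P3 P4 ->
      x \in [:: (u, 0); (0, v); (0, v'); (u', 0)] by move=> x; rewrite hV.
  have i1 : meet P1 P2 \in vertices P1 P2 P3 P4 by rewrite /vertices !inE eqxx ?orbT.
  have i2 : meet P2 P3 \in vertices P1 P2 P3 P4 by rewrite /vertices !inE eqxx ?orbT.
  have i3 : meet P3 P4 \in vertices P1 P2 P3 P4 by rewrite /vertices !inE eqxx ?orbT.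
  have i4 : meet P4 P1 \in vertices P1 P2 P3 P4 by rewrite /vertices !inE eqxx ?orbT.
  have [H1 H2] := back (neq_of a1 b3 D13) (neq_of a1 c3 D13) (neq_of a2 d4 D24)
    (neq_of b2 c4 D24) (neq_of b2 d4 D24) (neq_of c3 d1 D31) e1 e2
    (mem _ i1) (mem _ i2) (mem _ i3) (mem _ i4).
  by rewrite H1 H2 !mul0r.
Qed.
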